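(* Consider the fixed-design additive regression setting and estimator described in the context, and assume $g^*=\sum_{j=1}^pg^*_j\in\mathcal G$ is additive with $\sum_j\|g^*_j\|_{F,j}\le C_1M_F$ and $\sum_j\|g^*_j\|_n^q\le C_1^qM_q$ for some $0\le q\le1$ and $M_q,M_F>0$ (possibly depending on $(n,p)$). Suppose that for constants $B_0>0$ and $0<\beta_0<2$, $$\max_{j}\int_0^\delta H^{1/2}(u,\mathcal G_j(\delta),\|\cdot\|_n)\,du\le B_0\delta^{1-\beta_0/2},\quad 0<\delta\le1,$$ and that the tuning uses $\psi_{nj}(\delta)=B_0\delta^{1-\beta_0/2}$, $\gamma_{nj}=\gamma_n(q)=B_0^{2/(2+\beta_0(1-q))}n^{-1/(2+\beta_0(1-q))}$ and $w_{nj}=w_n(q)=\gamma_n(q)^{1-q}$ for all $j$. Assume the sub-Gaussian noise condition, and the empirical compatibility condition with constants $\kappa_0>0,\xi_0>1$ for $S=\{1\le j\le p:\|g^*_j\|_n>C_0\lambda_{nj}\}$ for some constant $C_0>0$. If $0<w_n(q)\le1$ for sufficiently large $n$, then for any $A_0>(\xi_0+1)/(\xi_0-1)$ there is a constant $K$ depending only on $(q,A_0,C_0,\xi_0,\kappa_0)$ such that, with probability at least $1-\epsilon$, $$\|\hat g-g^*\|_n^2+(A_0-1)R_n(\hat g-g^* )\le K\,C_1^2(M_F+M_q)\Big\{\gamma_n(q)+\sqrt{\log(p/\epsilon)/n}\Big\}^{2-q}.$$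
   Context: Data: $(Y_i,X_i)$, $i=1,\dots,n$, $Y_i=g^*(X_i)+\varepsilon_i$. Fixed design: $X_1,\dots,X_n$ deterministic; probabilities refer to the noise. For $j=1,\dots,p$, $x^{(j)}$ is a fixed sub-vector of coordinates of $x$, $\mathcal G_j$ is a vector space of functions of $x^{(j)}$ with semi-norm $\|\cdot\|_{F,j}$, $\mathcal G=\{\sum_jg_j(x^{(j)}):g_j\in\mathcal G_j\}$; each $g\in\mathcal G$ comes with a decomposition $g=\sum_jg_j$. $\|f\|_n^2=n^{-1}\sum_if(X_i)^2$, $\|Y-g\|_n^2=n^{-1}\sum_i\{Y_i-g(X_i)\}^2$, $\langle\varepsilon,f\rangle_n=n^{-1}\sum_i\varepsilon_if(X_i)$; $H(u,\mathcal F,\|\cdot\|)$ is the log covering number at radius $u$; $\mathcal G_j(\delta)=\{f\in\mathcal G_j:\|f\|_{F,j}+\|f\|_n/\delta\le1\}$. Convention: $\|g_j\|_n^0=1$ if $\|g_j\|_n>0$ and $0$ otherwise. Sub-Gaussian noise condition: $\varepsilon_i$ independent, mean zero, $\max_iD_0E\exp(\varepsilon_i^2/D_0)\le D_1$. $C_1=C_1(D_0,D_1)>0$ is a constant depending only on $(D_0,D_1)$ such that for every $\delta>0$, every class $\mathcal F$ with $\sup_{\mathcal F}\|f\|_n\le\delta$ and every $\psi\ge\int_0^\delta H^{1/2}(u,\mathcal F,\|\cdot\|_n)du$, $P\{\sup_{\mathcal F}|\langle\varepsilon,f\rangle_n|/C_1>n^{-1/2}\psi+\delta\sqrt{t/n}\}\le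 e^{-t}$, $t>0$. Tuning and estimator: $0<\epsilon<1$; $\lambda_{nj}=C_1\{\gamma_{nj}+\sqrt{\log(p/\epsilon)/n}\}$, $\rho_{nj}=\lambda_{nj}w_{nj}$, $R_n(g)=\sum_j(\rho_{nj}\|g_j\|_{F,j}+\lambda_{nj}\|g_j\|_n)$; for $A_0>1$, $\hat g=\sum_j\hat g_j$ minimizes $\|Y-g\|_n^2/2+A_0R_n(g)$ over $g\in\mathcal G$ and decompositions; $R_n(\hat g-g^* )$ is computed with components $\hat g_j-g^*_j$. Empirical compatibility condition for $(S,\kappa_0,\xi_0)$: for all $f_j\in\mathcal G_j$, $f=\sum_jf_j$, if $\sum_j\lambda_{nj}w_{nj}\|f_j\|_{F,j}+\sum_{j\notin S}\lambda_{nj}\|f_j\|_n\le\xi_0\sum_{j\in S}\lambda_{nj}\|f_j\|_n$ then $\kappa_0^2(\sum_{j\in S}\lambda_{nj}\|f_j\|_n)^2\le(\sum_{j\in S}\lambda_{nj}^2)\|f\|_n^2$. *)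

(* Defs.v *)
From HB Require Import structures.
From mathcomp Require Import all_boot all_order all_algebra.
From mathcomp Require Import all_classical all_reals all_analysis.
Set Implicit Arguments. Unset Strict Implicit. Unset Printing Implicit Defensive.
Import Order.TTheory GRing.Theory Num.Theory.
Import numFieldNormedType.Exports.
Local Open Scope classical_set_scope.
Local Open Scope ring_scope.

Section AdditiveRegression.
Variables (R : realType) (n dim : nat) (X : 'I_n -> 'rV[R]_dim).

Notation fn := ('rV[R]_dim -> R).

Definition empnorm (f : fn) : R := Num.sqrt (n%:R^-1 * \sum_(i < n) f (X i) ^+ 2).

Definition empinner (e : 'I_n -> R) (f : fn) : R :=
  n%:R^-1 * \sum_(i < n) e i * f (X i).

Definition emploss (Y : 'I_n -> R) (g : fn) : R :=
  n%:R^-1 * \sum_(i < n) (Y i - g (X i)) ^+ 2.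

Definition covers (s : seq fn) (u : R) (F : set fn) : Prop :=
  forall f, F f -> has (fun c => empnorm (fun x => f x - c x) <= u) s.

(* covering number N(u, F, ||.||_n) (+oo if no finite cover) *)
Definition covnum (F : set fn) (u : R) : \bar R :=
  ereal_inf [set ((size s)%:R)%:E | s in [set s | covers s u F]].

Definition sqrt_entropy (F : set fn) (u : R) : \bar R :=
  match covnum F u with
  | EFin r => (Num.sqrt (ln r))%:E
  | _ => +oo%E
  end.

Definition entropy_integral (F : set fn) (delta : R) : \bar R :=
  let I : set R := [set` `]0, delta]] in
  (\int[@lebesgue_measure R]_(u in I) sqrt_entropy F u)%E.

Definition qpow (x q : R) : R :=
  if q == 0 then (if 0 < x then 1 else 0) else x `^ q.

Variable p : nat.

Definition gsum (g : 'I_p -> fn) : fn := fun x => \sum_(j < p) g j x.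

Definition Rpen (nF : 'I_p -> fn -> R) (lam rho : 'I_p -> R) (g : 'I_p -> fn) : R :=
  \sum_(j < p) (rho j * nF j (g j) + lam j * empnorm (g j)).

Definition objective (nF : 'I_p -> fn -> R) (lam rho : 'I_p -> R) (A0 : R)
  (Y : 'I_n -> R) (g : 'I_p -> fn) : R :=
  emploss Y (gsum g) / 2 + A0 * Rpen nF lam rho g.

Definition is_minimizer (G : 'I_p -> set fn) (nF : 'I_p -> fn -> R)
  (lam rho : 'I_p -> R) (A0 : R) (Y : 'I_n -> R) (ghat : 'I_p -> fn) : Prop :=
  (forall j, G j (ghat j)) /\
  forall g : 'I_p -> fn, (forall j, G j (g j)) ->
    objective nF lam rho A0 Y ghat <= objective nF lam rho A0 Y g.

(* structure: G_j is a vector space of functions of the sub-vector x^(j)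
   (coordinates coords j), and ||.||_{F,j} is a semi-norm on G_j *)
Definition additive_structure (coords : 'I_p -> {set 'I_dim})
  (G : 'I_p -> set fn) (nF : 'I_p -> fn -> R) : Prop :=
  forall j,
    [/\ G j (fun _ => 0),
        (forall f g, G j f -> G j g -> G j (fun x => f x + g x)),
        (forall a f, G j f -> G j (fun x => a * f x)),
        (forall f, G j f -> forall x y : 'rV[R]_dim,
            (forall k, k \in coords j -> x ord0 k = y ord0 k) -> f x = f y) &
        [/\ (forall f, G j f -> 0 <= nF j f),
            (forall a f, G j f -> nF j (fun x => a * f x) = `|a| * nF j f) &
            (forall f g, G j f -> G j g ->
               nF j (fun x => f x + g x) <= nF j f + nF j g)]].

Definition Gdelta (G : 'I_p -> set fn) (nF : 'I_p -> fn -> R) (j : 'I_p) (delta : R)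
  : set fn := [set f | G j f /\ nF j f + empnorm f / delta <= 1].

Definition compatibility (G : 'I_p -> set fn) (nF : 'I_p -> fn -> R)
  (lam w : 'I_p -> R) (S : {set 'I_p}) (kappa0 xi0 : R) : Prop :=
  forall f : 'I_p -> fn, (forall j, G j (f j)) ->
    \sum_(j < p) lam j * w j * nF j (f j)
      + \sum_(j < p | j \notin S) lam j * empnorm (f j)
      <= xi0 * \sum_(j < p | j \in S) lam j * empnorm (f j) ->
    kappa0 ^+ 2 * (\sum_(j < p | j \in S) lam j * empnorm (f j)) ^+ 2
      <= (\sum_(j < p | j \in S) lam j ^+ 2) * empnorm (gsum f) ^+ 2.

End AdditiveRegression.

Section Noise.
Local Open Scope ereal_scope.
Variables (R : realType) (d : measure_display) (Omega : measurableType d)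
  (P : probability Omega R) (n : nat).

Definition mutually_independent (eps : 'I_n -> Omega -> R) : Prop :=
  forall B : 'I_n -> set R, (forall i, measurable (B i)) ->
    P (\bigcap_(i in [set: 'I_n]) (eps i @^-1` B i)) =
    \prod_(i < n) P (eps i @^-1` B i).

Definition subgaussian (eps : 'I_n -> Omega -> R) (D0 D1 : R) : Prop :=
  (0 < D0)%R /\ mutually_independent eps /\
  forall i : 'I_n,
    [/\ measurable_fun setT (eps i),
        P.-integrable setT (fun w => (eps i w)%:E),
        \int[P]_w (eps i w)%:E = 0 &
        D0%:E * \int[P]_w (expR (eps i w ^+ 2 / D0))%:E <= D1%:E].

(* the defining property of the constant C1 (for this noise vector):
   P{ sup_F |<eps,f>_n| / C1 > n^-1/2 psi + delta sqrt(t/n) } <= e^-t,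
   stated as: the complementary event contains a measurable set of
   probability >= 1 - e^-t. *)
Definition concentration (dim : nat) (X : 'I_n -> 'rV[R]_dim) (eps : 'I_n -> Omega -> R)
  (C1 : R) : Prop :=
  forall (delta : R), (0 < delta)%R ->
  forall F : set ('rV[R]_dim -> R), (forall f, F f -> (empnorm X f <= delta)%R) ->
  forall psi : R, entropy_integral X F delta <= psi%:E ->
  forall t : R, (0 < t)%R ->
  exists E : set Omega, [/\ measurable E, (1 - expR (- t))%:E <= P E &
    forall w, E w -> forall f, F f ->
      (`|empinner X (fun i => eps i w) f| / C1
         <= Num.sqrt (n%:R^-1) * psi + delta * Num.sqrt (t / n%:R))%R].

End Noise.

(* Main.v *)
Require Import Defs.
From HB Require Import structures.
From mathcomp Require Import all_boot all_order all_algebra.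
From mathcomp Require Import all_classical all_reals all_analysis.
From mathcomp Require Import ring lra.
Import Order.TTheory GRing.Theory Num.Theory.
Import numFieldNormedType.Exports.
Local Open Scope classical_set_scope.
Local Open Scope ring_scope.

Section Emp.
Context {R : realType} {n dim : nat} (X : 'I_n -> 'rV[R]_dim).
Notation fn := ('rV[R]_dim -> R).

Lemma cs_sum (a b : 'I_n -> R) :
  \sum_i a i * b i <= Num.sqrt (\sum_i a i ^+ 2) * Num.sqrt (\sum_i b i ^+ 2).
Proof.
have key : (\sum_i a i * b i) ^+ 2 <= (\sum_i a i ^+ 2) * (\sum_i b i ^+ 2).
  rewrite expr2 !big_distrlr /=.
  have E1 : \sum_i \sum_j (a i * b i) * (a j * b j)
     = \sum_i \sum_j ((a i ^+ 2 * b j ^+ 2 + a j ^+ 2 * b i ^+ 2) / 2 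
          - (a i * b j - a j * b i) ^+ 2 / 2).
    by apply: eq_bigr => i _; by apply: eq_bigr => j _; field.
  have E2 : \sum_i \sum_j (a i ^+ 2 * b j ^+ 2 + a j ^+ 2 * b i ^+ 2) / 2
     = \sum_i \sum_j a i ^+ 2 * b j ^+ 2.
    have h : forall i : 'I_n, \sum_j (a i ^+ 2 * b j ^+ 2 + a j ^+ 2 * b i ^+ 2) / 2
       = \sum_j (a i ^+ 2 * b j ^+ 2) / 2 + \sum_j (a j ^+ 2 * b i ^+ 2) / 2.
      by move=> i; rewrite -big_split; apply: eq_bigr => j _; rewrite mulrDl.
    under eq_bigr do rewrite h.
    rewrite big_split /= [X in _ + X]exchange_big /= -big_split /=.
    apply: eq_bigr => i _; rewrite -big_split /=; by apply: eq_bigr => j _; field.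
  rewrite E1 -E2; apply: ler_sum => i _; apply: ler_sum => j _.
  rewrite lerBlDr lerDl; apply: divr_ge0 => //; exact: sqr_ge0.
have := key; rewrite -(ler_sqrt) ?mulr_ge0 ?sumr_ge0 // => [|i _|i _]; try exact: sqr_ge0.
rewrite sqrtr_sqr sqrtrM ?sumr_ge0 // => [h|i _]; last exact: sqr_ge0.
exact: le_trans (ler_norm _) h.
Qed.


Lemma empnorm_ge0 f : 0 <= empnorm X f.
Proof. exact: sqrtr_ge0. Qed.

Lemma sumsq_ge0 (f : fn) : 0 <= \sum_(i < n) f (X i) ^+ 2.
Proof. by apply: sumr_ge0 => i _; exact: sqr_ge0. Qed.

Lemma empnorm_sqr f : empnorm X f ^+ 2 = n%:R^-1 * \sum_(i < n) f (X i) ^+ 2.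
Proof. by rewrite sqr_sqrtr // mulr_ge0 // ?invr_ge0 // sumsq_ge0. Qed.

Lemma empnormE f : empnorm X f = Num.sqrt (n%:R^-1) * Num.sqrt (\sum_(i < n) f (X i) ^+ 2).
Proof. by rewrite /empnorm sqrtrM // invr_ge0. Qed.

Lemma empnormZ a f : empnorm X (fun x => a * f x) = `|a| * empnorm X f.
Proof.
rewrite !empnormE mulrCA; congr (_ * _).
have -> : \sum_(i < n) (a * f (X i)) ^+ 2 = a ^+ 2 * \sum_(i < n) f (X i) ^+ 2.
  by rewrite mulr_sumr; apply: eq_bigr => i _; rewrite exprMn.
by rewrite sqrtrM ?sqr_ge0 // sqrtr_sqr.
Qed.

Lemma empnormD f g : empnorm X (fun x => f x + g x) <= empnorm X f + empnorm X g.
Proof.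
rewrite !empnormE -mulrDr ler_wpM2l ?sqrtr_ge0 //.
set A := \sum_(i < n) f (X i) ^+ 2; set B := \sum_(i < n) g (X i) ^+ 2.
have hA : 0 <= A by exact: sumsq_ge0.
have hB : 0 <= B by exact: sumsq_ge0.
have E : \sum_(i < n) (f (X i) + g (X i)) ^+ 2 = A + 2 * \sum_(i < n) f (X i) * g (X i) + B.
  rewrite /A /B mulr_sumr -!big_split /=; apply: eq_bigr => i _; ring.
have cs := cs_sum (fun i => f (X i)) (fun i => g (X i)).
have -> : Num.sqrt A + Num.sqrt B = Num.sqrt ((Num.sqrt A + Num.sqrt B) ^+ 2).
  by rewrite sqrtr_sqr ger0_norm // addr_ge0 // sqrtr_ge0.
rewrite ler_sqrt ?sqr_ge0 // E sqrrD !sqr_sqrtr //.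
rewrite lerD2r lerD2l mulr2n; move: cs; rewrite -/A -/B; lra.
Qed.

Lemma empnorm0_pt f : (0 < n)%N -> empnorm X f = 0 -> forall i, f (X i) = 0.
Proof.
move=> n0 /eqP; rewrite sqrtr_eq0 => h i.
have hN : 0 < n%:R^-1 :> R by rewrite invr_gt0 ltr0n.
have hA : \sum_(i < n) f (X i) ^+ 2 = 0.
  apply/eqP; rewrite eq_le sumsq_ge0 andbT.
  by rewrite -(pmulr_rle0 _ hN).
have := psumr_eq0P (fun i _ => sqr_ge0 (f (X i))) hA (i:=i) isT.
by move/eqP; rewrite sqrf_eq0 => /eqP.
Qed.

Lemma empinnerZ e a f : empinner X e (fun x => a * f x) = a * empinner X e f.
Proof.
by rewrite /empinner !mulr_sumr; apply: eq_bigr => i _; ring.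
Qed.

End Emp.


Section UB.
Context {R : realType} {d : measure_display} {Omega : measurableType d}
  (P : probability Omega R).

Lemma prob_real (A : set Omega) : measurable A -> exists x : R, P A = x%:E.
Proof.
move=> mA; have h1 : (P A <= 1)%E := probability_le1 P mA; have h0 : (0 <= P A)%E := measure_ge0 P A.
move: h1 h0; case: (P A) => [x _ _|h _|_ h]; [by exists x|by rewrite leye_eq in h|by rewrite leeNy_eq in h].
Qed.

Lemma union_bound (p : nat) (E : 'I_p -> set Omega) (r : R) :
  (forall j, measurable (E j)) -> (forall j, ((1 - r)%:E <= P (E j))%E) ->
  exists F : set Omega, [/\ measurable F, ((1 - p%:R * r)%:E <= P F)%E &
     forall w, F w -> forall j, E j w].
Proof.
move=> mE hE.
pose C k := [set w | exists j : 'I_p, (j < k)%N /\ ~ E j w].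
have hC : forall k, (k <= p)%N -> measurable (C k) /\ (P (C k) <= (k%:R * r)%:E)%E.
  elim=> [_|k IH kp].
    have -> : C 0%N = set0 by apply/seteqP; split => w //= [j [+ _]].
    by rewrite measure0 mul0r; split.
  have kp' : (k < p)%N by [].
  have [mC PC] := IH (ltnW kp).
  pose jk := Ordinal kp'.
  have -> : C k.+1 = C k `|` ~` E jk.
    apply/seteqP; split => w /=.
      move=> [j [jk1 nE]]; rewrite ltnS leq_eqVlt in jk1.
      case/orP: jk1 => [/eqP ej|jl]; last by left; exists j.
      by right; have -> : jk = j by apply: val_inj.
    by move=> [[j [jl nE]]|nE]; [exists j; split => //; exact: ltnW|exists jk].
  split; first by apply: measurableU => //; exact: measurableC.
  have U2 : (P (C k `|` ~` E jk) <= P (C k) + P (~` E jk))%E.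
    by apply: measureU2 => //; exact: measurableC.
  apply: le_trans U2 _.
  rewrite (probability_setC P (mE jk)).
  have [x hx] := prob_real _ (mE jk).
  have [y hy] := prob_real _ mC.
  have := hE jk; rewrite hx; move: PC; rewrite hy.
  rewrite !lee_fin => h1 h2.
  rewrite -natr1; lra.
have [mC PC] := hC p (leqnn p).
exists (~` C p); split.
- exact: measurableC.
- rewrite (probability_setC P mC).
  have [y hy] := prob_real _ mC; move: PC; rewrite hy !lee_fin => h1.
  lra.
- move=> w nC j; apply: contrapT => nE; apply: nC; exists j; split => //.
Qed.

End UB.


Section Alg.
Context {R : realType}.

Definition cc (A0 xi0 : R) := A0 - 1 - (A0 + 1) / xi0.
Definition K1 (A0 kappa0 : R) := 16 * A0 ^+ 2 / kappa0 ^+ 2.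
Definition K2 (A0 xi0 : R) := 8 * A0 + 2 * A0 * (A0 - 1) * (1 + 1 / xi0) / cc A0 xi0.

Lemma cc_gt0 (A0 xi0 : R) : 1 < xi0 -> (xi0 + 1) / (xi0 - 1) < A0 -> 0 < cc A0 xi0.
Proof.
move=> x1 hA; rewrite /cc.
have hx : 0 < xi0 - 1 by lra.
rewrite ltr_pdivrMr // in hA.
rewrite subr_gt0 ltr_pdivrMr; last lra.
nra.
Qed.

Lemma A0_gt1 (A0 xi0 : R) : 1 < xi0 -> (xi0 + 1) / (xi0 - 1) < A0 -> 1 < A0.
Proof.
move=> x1 hA; have hx : 0 < xi0 - 1 by lra.
rewrite ltr_pdivrMr // in hA; nra.
Qed.

Lemma amgm_step (A0 a D t : R) : 0 <= A0 -> 0 <= D -> 0 <= t -> a ^+ 2 <= t * D ->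
  2 * A0 * a <= D / 4 + 4 * A0 ^+ 2 * t.
Proof.
move=> hA hD ht ha.
set y := D / 4 + 4 * A0 ^+ 2 * t.
have hy : 0 <= y by rewrite /y; apply: addr_ge0; [lra| nra].
have h2 : (2 * A0 * a) ^+ 2 <= y ^+ 2.
  have : (2 * A0 * a) ^+ 2 <= 4 * A0 ^+ 2 * (t * D).
    have -> : (2 * A0 * a) ^+ 2 = 4 * A0 ^+ 2 * a ^+ 2 by ring.
    by apply: ler_wpM2l => //; nra.
  move=> h; apply: le_trans h _.
  rewrite -subr_ge0.
  have -> : y ^+ 2 - 4 * A0 ^+ 2 * (t * D) = (D / 4 - 4 * A0 ^+ 2 * t) ^+ 2 by rewrite /y; field.
  exact: sqr_ge0.
case: (lerP (2 * A0 * a) 0) => h0; first exact: le_trans h0 hy.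
by rewrite -(@ler_pXn2r _ 2) // ?nnegrE // ltW.
Qed.

Lemma cases_core (A0 xi0 kappa0 D a b s eta : R) :
  1 < xi0 -> (xi0 + 1) / (xi0 - 1) < A0 -> 0 < kappa0 ->
  0 <= D -> 0 <= a -> 0 <= b -> 0 <= s -> 0 <= eta ->
  D / 2 + (A0 - 1) * b <= (A0 + 1) * a + 2 * A0 * eta ->
  (b <= xi0 * a -> kappa0 ^+ 2 * a ^+ 2 <= s * D) ->
  D + (A0 - 1) * (a + b) <= K1 A0 kappa0 * s + K2 A0 xi0 * eta.
Proof.
move=> x1 hA k0 hD ha hb hs he hbasic hcomp.
have A1 := A0_gt1 _ _ x1 hA; have c0 := cc_gt0 _ _ x1 hA.
have hK1 : 0 <= K1 A0 kappa0 * s.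
  by rewrite /K1; apply: mulr_ge0 => //; apply: divr_ge0; nra.
have hK2a : 0 <= 2 * A0 * (A0 - 1) * (1 + 1 / xi0) / cc A0 xi0 * eta.
  apply: mulr_ge0 => //; apply: divr_ge0; last lra.
  apply: mulr_ge0; first nra.
  have : 0 < 1 / xi0 by apply: divr_gt0; lra.
  lra.
case: (lerP b (xi0 * a)) => hc.
- have hk := hcomp hc.
  have ht : a ^+ 2 <= (s / kappa0 ^+ 2) * D.
    rewrite mulrAC ler_pdivlMr ?exprn_gt0 //; lra.
  have := amgm_step A0 a D (s / kappa0 ^+ 2) (ltW (lt_trans ltr01 A1)) hD (divr_ge0 hs (ltW (exprn_gt0 2 k0))) ht.
  have eK1 : K1 A0 kappa0 * s = 4 * (4 * A0 ^+ 2 * (s / kappa0 ^+ 2)).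
    by rewrite /K1; field; rewrite gt_eqF.
  rewrite /K2 eK1 mulrDl.
  move=> h.
  nra.
- have hxa : a <= b / xi0.
    by rewrite ler_pdivlMr; [lra|lra].
  have h1 : (A0 + 1) * a <= (A0 + 1) * (b / xi0) by apply: ler_wpM2l; lra.
  have hcb : D / 2 + cc A0 xi0 * b <= 2 * A0 * eta.
    rewrite /cc; move: hbasic h1; rewrite mulrA. lra.
  have hb' : b <= 2 * A0 * eta / cc A0 xi0.
    rewrite ler_pdivlMr //; nra.
  have hab : a + b <= (1 + 1 / xi0) * b.
    move: hxa; rewrite mulrDl mul1r mul1r mulrC; lra.
  have hx' : 0 <= 1 + 1 / xi0.
    have : 0 < 1 / xi0 by apply: divr_gt0; lra.
    lra.
  have h3 : (A0 - 1) * (a + b) <= (A0 - 1) * ((1 + 1 / xi0) * (2 * A0 * eta / cc A0 xi0)).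
    apply: ler_wpM2l; first lra.
    apply: le_trans hab _; apply: ler_wpM2l => //.
  have -> : K2 A0 xi0 * eta = 8 * A0 * eta + (A0 - 1) * ((1 + 1 / xi0) * (2 * A0 * eta / cc A0 xi0)).
    by rewrite /K2; field; rewrite !gt_eqF //; lra.
  have hD4 : D <= 4 * A0 * eta by nra.
  nra.
Qed.

End Alg.

Section Alg2.
Context {R : realType}.
Lemma K1_ge0 (A0 kappa0 : R) : 0 <= K1 A0 kappa0.
Proof. by rewrite /K1; apply: divr_ge0; [apply: mulr_ge0 => //; exact: sqr_ge0| exact: sqr_ge0]. Qed.

Lemma K2_ge0 (A0 xi0 : R) : 1 < xi0 -> (xi0 + 1) / (xi0 - 1) < A0 -> 0 <= K2 A0 xi0.
Proof.
move=> x1 hA; have A1 := A0_gt1 _ _ x1 hA; have c0 := cc_gt0 _ _ x1 hA.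
rewrite /K2; apply: addr_ge0; first lra.
apply: divr_ge0; last lra.
apply: mulr_ge0; first nra.
have : 0 < 1 / xi0 by apply: divr_gt0; lra.
lra.
Qed.
End Alg2.


Section Det.
Context {R : realType}.

Lemma det_sum (p : nat) (S : {set 'I_p}) (lam w A0 D : R) (nd fd ng fg ns fs : 'I_p -> R) :
  0 <= lam -> 0 <= w -> 0 <= A0 ->
  (forall j, ns j <= ng j + nd j) -> (forall j, nd j <= ng j + ns j) ->
  (forall j, fd j <= fg j + fs j) ->
  D / 2 + A0 * \sum_(j < p) (lam * w * fg j + lam * ng j)
    <= \sum_(j < p) lam * (nd j + w * fd j) + A0 * \sum_(j < p) (lam * w * fs j + lam * ns j) ->
  D / 2 + (A0 - 1) * (\sum_(j < p) lam * w * fd j + \sum_(j < p | j \notin S) lam * nd j)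
    <= (A0 + 1) * (\sum_(j < p | j \in S) lam * nd j)
       + 2 * A0 * (\sum_(j < p) lam * w * fs j + \sum_(j < p | j \notin S) lam * ns j).
Proof.
move=> hl hw hA h1 h2 h3 hb.
pose T j := (A0 - 1) * (lam * w * fd j) - 2 * A0 * (lam * w * fs j) +
   (if j \in S then - ((A0 + 1) * (lam * nd j))
    else (A0 - 1) * (lam * nd j) - 2 * A0 * (lam * ns j)).
have hT : forall j, T j <= A0 * (lam * w * fg j + lam * ng j) - lam * (nd j + w * fd j)
                          - A0 * (lam * w * fs j + lam * ns j).
  move=> j; rewrite /T.
  have e1 := h1 j; have e2 := h2 j; have e3 := h3 j.
  have q1 : A0 * (lam * w) * fd j <= A0 * (lam * w) * (fg j + fs j).
    by apply: ler_wpM2l => //; apply: mulr_ge0 => //; apply: mulr_ge0.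
  case: (j \in S).
  - have q2 : A0 * lam * ns j <= A0 * lam * (ng j + nd j) by apply: ler_wpM2l => //; exact: mulr_ge0.
    nra.
  - have q2 : A0 * lam * nd j <= A0 * lam * (ng j + ns j) by apply: ler_wpM2l => //; exact: mulr_ge0.
    nra.
have hsum : \sum_(j < p) T j <= \sum_(j < p) (A0 * (lam * w * fg j + lam * ng j) - lam * (nd j + w * fd j) - A0 * (lam * w * fs j + lam * ns j)) by apply: ler_sum => j _; exact: hT.
have eT : \sum_(j < p) T j = (A0 - 1) * \sum_(j < p) lam * w * fd j
    - 2 * A0 * \sum_(j < p) lam * w * fs j
    - (A0 + 1) * (\sum_(j < p | j \in S) lam * nd j)
    + (A0 - 1) * (\sum_(j < p | j \notin S) lam * nd j)
    - 2 * A0 * (\sum_(j < p | j \notin S) lam * ns j).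
  have eI : \sum_(j < p) (if j \in S then - ((A0 + 1) * (lam * nd j))
    else (A0 - 1) * (lam * nd j) - 2 * A0 * (lam * ns j))
    = \sum_(j < p | j \in S) - ((A0 + 1) * (lam * nd j))
      + \sum_(j < p | j \notin S) ((A0 - 1) * (lam * nd j) - 2 * A0 * (lam * ns j)).
    rewrite (bigID (fun j => j \in S)) /=; congr (_ + _); apply: eq_bigr => j hj.
      by rewrite hj.
    by rewrite (negbTE hj).
  rewrite /T big_split /= sumrB eI sumrN sumrB -!mulr_sumr; ring.
have eR : \sum_(j < p) (A0 * (lam * w * fg j + lam * ng j) - lam * (nd j + w * fd j)
                          - A0 * (lam * w * fs j + lam * ns j))
   = A0 * \sum_(j < p) (lam * w * fg j + lam * ng j) - \sum_(j < p) lam * (nd j + w * fd j)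
     - A0 * \sum_(j < p) (lam * w * fs j + lam * ns j).
  by rewrite !sumrB -!mulr_sumr.
have eN : \sum_(j < p) lam * (nd j + w * fd j) = \sum_(j < p | j \in S) lam * nd j
     + \sum_(j < p | j \notin S) lam * nd j + \sum_(j < p) lam * w * fd j.
  have -> : \sum_(j < p) lam * (nd j + w * fd j) = \sum_(j < p) lam * nd j + \sum_(j < p) lam * w * fd j.
    by rewrite -big_split; apply: eq_bigr => j _ /=; ring.
  by rewrite [\sum_(j < p) lam * nd j](bigID (fun j => j \in S)) /=.
move: hsum; rewrite eT eR eN; lra.
Qed.

End Det.


Section Pw.
Context {R : realType}.
Implicit Types x a q : R.

Lemma qpow_ge0 x q : 0 <= qpow x q.
Proof. rewrite /qpow; case: ifP => _; [by case: ifP|exact: powR_ge0]. Qed.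

Lemma qpow_le x a q : 0 <= q <= 1 -> 0 < a -> 0 <= x <= a -> x <= a `^ (1 - q) * qpow x q.
Proof.
move=> /andP[q0 q1] a0 /andP[x0 xa]; rewrite /qpow.
case: eqP => [->|/eqP qn0].
  rewrite subr0 (powRr1 (ltW a0)).
  case: ifP => h; first by rewrite mulr1.
  have -> : x = 0 by apply/eqP; rewrite eq_le x0 andbT leNgt h.
  by rewrite mulr0.
case: (eqVneq x 0) => [->|xn0]; first by rewrite powR0 // mulr0.
have xp : 0 < x by rewrite lt0r xn0.
have ex : x = x `^ (1 - q) * x `^ q.
  by rewrite -powRD ?subrK ?powRr1 ?ltW // ?xn0 ?implybT.
rewrite {1}ex. apply: ler_wpM2r; first exact: powR_ge0.
by apply: ge0_ler_powR; rewrite ?subr_ge0 ?nnegrE // ltW.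
Qed.

Lemma qpow_ge x a q : 0 <= q <= 1 -> 0 < a -> a < x -> a `^ q <= qpow x q.
Proof.
move=> /andP[q0 q1] a0 ax; rewrite /qpow.
case: eqP => [->|/eqP qn0]; first by rewrite powRr0 (lt_trans a0 ax).
by apply: ge0_ler_powR; rewrite // ?nnegrE ltW // (lt_trans a0 ax).
Qed.

Lemma powR_expR a (y : R) : (expR a) `^ y = expR (a * y).
Proof. by rewrite expRM. Qed.

Lemma sqrt_expR (c : R) : Num.sqrt (expR c) = expR (c / 2).
Proof.
have -> : expR c = expR (c / 2) ^+ 2 by rewrite expr2 -expRD; congr expR; field.
by rewrite sqrtr_sqr ger0_norm // expR_ge0.
Qed.

Lemma gam_id (B0 N q beta : R) : 0 < B0 -> 0 < N -> 0 <= q <= 1 -> 0 < beta < 2 ->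
  Num.sqrt (N^-1) * (B0 * ((B0 `^ (2 / (2 + beta * (1 - q))) * N `^ (- (1 / (2 + beta * (1 - q)))))
      `^ (1 - q)) `^ (1 - beta / 2))
  = (B0 `^ (2 / (2 + beta * (1 - q))) * N `^ (- (1 / (2 + beta * (1 - q)))))
    * (B0 `^ (2 / (2 + beta * (1 - q))) * N `^ (- (1 / (2 + beta * (1 - q))))) `^ (1 - q).
Proof.
move=> B0p Np /andP[q0 q1] /andP[b0 b2].
have hbq : 0 <= beta * (1 - q) by apply: mulr_ge0; lra.
have hD : 2 + beta * (1 - q) != 0 by rewrite gt_eqF //; lra.
rewrite -(lnK B0p) -(lnK Np).
set a := ln B0; set b := ln N.
rewrite !powR_expR -expRD !powR_expR -expRN sqrt_expR -!expRD.
congr expR.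
field; exact: hD.
Qed.

End Pw.


Lemma scale_bound (R : realType) (n dim : nat) (X : 'I_n -> 'rV[R]_dim)
  (Gj : set ('rV[R]_dim -> R)) (nFj : ('rV[R]_dim -> R) -> R) (e : 'I_n -> R) (w lamw : R) :
  (0 < n)%N -> 0 < w ->
  (forall a f, Gj f -> Gj (fun x => a * f x)) ->
  (forall f, Gj f -> 0 <= nFj f) ->
  (forall a f, Gj f -> nFj (fun x => a * f x) = `|a| * nFj f) ->
  (forall f, Gj f -> nFj f + empnorm X f / w <= 1 -> `|empinner X e f| <= lamw) ->
  forall f, Gj f -> `|empinner X e f| <= lamw * (nFj f + empnorm X f / w).
Proof.
move=> n0 w0 hZ hF0 hFZ hb f Gf.
set c := nFj f + empnorm X f / w.
have hn := empnorm_ge0 X f.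
have hnw : 0 <= empnorm X f / w by apply: divr_ge0 => //; exact: ltW.
have c0 : 0 <= c by apply: addr_ge0 => //; exact: hF0.
case: (eqVneq c 0) => [ce|cn].
  have hF : nFj f = 0 by move: ce; rewrite /c; have := hF0 f Gf; lra.
  have hN : empnorm X f = 0.
    have : empnorm X f / w = 0 by move: ce; rewrite /c hF; lra.
    by move/eqP; rewrite mulf_eq0 invr_eq0 (gt_eqF w0) orbF => /eqP.
  have hpt := @empnorm0_pt _ _ _ X f n0 hN.
  have -> : empinner X e f = 0.
    by rewrite /empinner big1 ?mulr0 // => i _; rewrite hpt mulr0.
  by rewrite ce mulr0 normr0.
have cp : 0 < c by rewrite lt0r cn.
have := hb _ (hZ c^-1 f Gf).
have ac : `|c^-1| = c^-1 by rewrite ger0_norm // invr_ge0.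
rewrite hFZ // empnormZ empinnerZ normrM ac.
rewrite -mulrA -mulrDr -/c mulVf // => /(_ (lexx _)) h.
by rewrite -ler_pdivrMr // mulrC.
Qed.


Lemma gsumB (R : realType) (dim p : nat) (gh gs : 'I_p -> 'rV[R]_dim -> R) x :
  gsum (fun j x => gh j x - gs j x) x = gsum gh x - gsum gs x.
Proof. by rewrite /gsum sumrB. Qed.

Lemma empinner_gsum (R : realType) (n dim p : nat) (X : 'I_n -> 'rV[R]_dim)
  (e : 'I_n -> R) (g : 'I_p -> 'rV[R]_dim -> R) :
  empinner X e (gsum g) = \sum_(j < p) empinner X e (g j).
Proof.
rewrite /empinner /gsum -mulr_sumr; congr (_ * _).
under eq_bigr do rewrite mulr_sumr.
by rewrite exchange_big.
Qed.

Lemma emploss_expand (R : realType) (n dim p : nat) (X : 'I_n -> 'rV[R]_dim)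
  (gs gh : 'I_p -> 'rV[R]_dim -> R) (e : 'I_n -> R) :
  emploss X (fun i => gsum gs (X i) + e i) (gsum gh)
  = emploss X (fun i => gsum gs (X i) + e i) (gsum gs)
    + empnorm X (gsum (fun j x => gh j x - gs j x)) ^+ 2
    - 2 * empinner X e (gsum (fun j x => gh j x - gs j x)).
Proof.
rewrite empnorm_sqr /emploss /empinner.
rewrite mulrCA -!mulrDr -mulrN -mulrDr; congr (_ * _).
rewrite mulr_sumr -sumrN -!big_split /=; apply: eq_bigr => i _; rewrite gsumB; ring.
Qed.


Lemma powRD_pos (R : realType) (x r s : R) : 0 < x -> x `^ (r + s) = x `^ r * x `^ s.
Proof. by move=> x0; rewrite powRD // (gt_eqF x0) implybT. Qed.

Lemma eqle (R : realType) (x y : R) : x = y -> x <= y.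
Proof. by move->. Qed.

Theorem corollary3 (R : realType) (q A0 C0 xi0 kappa0 : R) :
  0 <= q <= 1 -> 0 < C0 -> 0 < kappa0 -> 1 < xi0 ->
  (xi0 + 1) / (xi0 - 1) < A0 ->
  exists K : R,
  forall (d : measure_display) (Omega : measurableType d) (P : probability Omega R)
    (n p dim : nat) (X : 'I_n -> 'rV[R]_dim) (coords : 'I_p -> {set 'I_dim})
    (G : 'I_p -> set ('rV[R]_dim -> R)) (nF : 'I_p -> ('rV[R]_dim -> R) -> R)
    (gstar : 'I_p -> ('rV[R]_dim -> R)) (eps : 'I_n -> Omega -> R)
    (D0 D1 C1 MF Mq B0 beta0 epsilon : R),
  (0 < n)%N -> (0 < p)%N ->
  additive_structure coords G nF ->
  (forall j, G j (gstar j)) ->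
  0 < MF -> 0 < Mq ->
  \sum_(j < p) nF j (gstar j) <= C1 * MF ->
  \sum_(j < p) qpow (empnorm X (gstar j)) q <= C1 `^ q * Mq ->
  0 < B0 -> 0 < beta0 < 2 ->
  (forall delta, 0 < delta <= 1 -> forall j : 'I_p,
     (entropy_integral X (Gdelta X G nF j delta) delta
        <= (B0 * delta `^ (1 - beta0 / 2))%:E)%E) ->
  subgaussian P eps D0 D1 ->
  0 < C1 -> concentration P X eps C1 ->
  0 < epsilon < 1 ->
  let gam := B0 `^ (2 / (2 + beta0 * (1 - q))) * n%:R `^ (- (1 / (2 + beta0 * (1 - q)))) in
  let w := gam `^ (1 - q) in
  let lam := C1 * (gam + Num.sqrt (ln (p%:R / epsilon) / n%:R)) in
  compatibility X G nF (fun _ => lam) (fun _ => w)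
    [set j : 'I_p | C0 * lam < empnorm X (gstar j)]%SET kappa0 xi0 ->
  0 < w <= 1 ->
  exists E : set Omega,
    [/\ measurable E, ((1 - epsilon)%:E <= P E)%E &
    forall omega, E omega ->
      let Y := fun i : 'I_n => gsum gstar (X i) + eps i omega in
      forall ghat : 'I_p -> ('rV[R]_dim -> R),
        is_minimizer X G nF (fun _ => lam) (fun _ => lam * w) A0 Y ghat ->
        let diff := fun j x => ghat j x - gstar j x in
        empnorm X (gsum diff) ^+ 2
          + (A0 - 1) * Rpen X nF (fun _ => lam) (fun _ => lam * w) diff
        <= K * C1 ^+ 2 * (MF + Mq)
             * (gam + Num.sqrt (ln (p%:R / epsilon) / n%:R)) `^ (2 - q)].
Proof.
move=> /andP[q0 q1] C0p k0 x1 hA.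
have A1 := A0_gt1 _ _ x1 hA.
exists (K1 A0 kappa0 * C0 `^ (- q) + K2 A0 xi0 * (1 + C0 `^ (1 - q))).
move=> d Omega P n p dim X coords G nF gstar eps D0 D1 C1 MF Mq B0 beta0 epsilon.
move=> n0 p0 hstr hGs MF0 Mq0 hMF hMq B00 /andP[b0 b2] hent _ C10 hconc /andP[e0 e1].
move=> gam w lam hcomp /andP[w0 w1].
set t := ln (p%:R / epsilon).
set L := gam + Num.sqrt (t / n%:R).
have N0 : 0 < n%:R :> R by rewrite ltr0n.
have P0 : 1 <= p%:R :> R by rewrite ler1n.
have gam0 : 0 < gam by apply: mulr_gt0; apply: powR_gt0.
have L0 : 0 < L by rewrite /L; apply: ltr_wpDr => //; exact: sqrtr_ge0.
have gL : gam <= L by rewrite /L lerDl sqrtr_ge0.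
have lam0 : 0 < lam by apply: mulr_gt0.
have lamE : lam = C1 * L by [].
have pe1 : 1 < p%:R / epsilon.
  by rewrite ltr_pdivlMr //; lra.
have t0 : 0 < t by apply: ln_gt0.
have et : expR (- t) = epsilon / p%:R.
  rewrite expRN /t lnK ?posrE; last by lra.
  by rewrite invf_div.
have hEj : forall j : 'I_p, exists E : set Omega,
    [/\ measurable E, ((1 - expR (- t))%:E <= P E)%E &
      forall w', E w' -> forall f, Gdelta X G nF j w f ->
        (`|empinner X (fun i => eps i w') f| / C1
           <= Num.sqrt (n%:R^-1) * (B0 * w `^ (1 - beta0 / 2)) + w * Num.sqrt (t / n%:R))%R].
  move=> j; apply: hconc => //.
  - move=> f [Gf hf]; have [_ _ _ _ [hF0 _ _]] := hstr j.
    have hF := hF0 f Gf.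
    have : empnorm X f / w <= 1 by lra.
    by rewrite ler_pdivrMr // mul1r.
  - by apply: hent; rewrite w0 w1.
have [Ef hEf] := choice hEj.
have mE : forall j, measurable (Ef j) by move=> j; have [] := hEf j.
have PE : forall j, ((1 - epsilon / p%:R)%:E <= P (Ef j))%E by move=> j; have [_ + _] := hEf j; rewrite et.
have [F [mF PF hF]] := @union_bound _ _ _ P p Ef (epsilon / p%:R) mE PE.
exists F; split => //.
  by move: PF; rewrite mulrCA divff ?mulr1 // gt_eqF // ltr0n.
move=> om Fom Y ghat [hGg hmin].
pose diff := fun j x => ghat j x - gstar j x.
change (empnorm X (gsum diff) ^+ 2 + (A0 - 1) * Rpen X nF (fun=> lam) (fun=> lam * w) diff <=
   (K1 A0 kappa0 * C0 `^ (- q) + K2 A0 xi0 * (1 + C0 `^ (1 - q))) * C1 ^+ 2 * (MF + Mq) * L `^ (2 - q)).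
set S := [set j : 'I_p | C0 * lam < empnorm X (gstar j)]%SET.
have gid : Num.sqrt (n%:R^-1) * (B0 * w `^ (1 - beta0 / 2)) = gam * w.
  exact: gam_id B00 N0 (introT andP (conj q0 q1)) (introT andP (conj b0 b2)).
have hnoise : forall j f, G j f ->
    `|empinner X (fun i => eps i om) f| <= lam * (empnorm X f + w * nF j f).
  move=> j f Gf; have [_ _ hZ _ [hF0 hFZ _]] := hstr j.
  have hb : forall f, G j f -> nF j f + empnorm X f / w <= 1 ->
      `|empinner X (fun i => eps i om) f| <= lam * w.
    move=> f' Gf' hf'; have [_ _ hb] := hEf j.
    have := hb om (hF om Fom j) f' (conj Gf' hf').
    rewrite gid ler_pdivrMr // => h; apply: le_trans h _.
    by rewrite lamE /L; apply: eqle; ring.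
  have := @scale_bound _ _ _ X (G j) (nF j) (fun i => eps i om) w (lam * w) n0 w0 hZ hF0 hFZ hb f Gf.
  move=> h; apply: le_trans h _; apply: eqle; by field; rewrite gt_eqF.
have wE : w = gam `^ (1 - q) by [].
clearbody lam w gam L.
have Gd : forall j, G j (diff j).
  move=> j; have [_ hD hZ _ _] := hstr j.
  have -> : diff j = (fun x => ghat j x + (-1) * gstar j x).
    by apply: funext => x; rewrite /diff mulN1r.
  by apply: hD => //; apply: hZ.
have tn1 : forall j, empnorm X (gstar j) <= empnorm X (ghat j) + empnorm X (diff j).
  move=> j.
  have -> : gstar j = (fun x => ghat j x + (-1) * diff j x).
    by apply: funext => x; rewrite /diff; ring.
  apply: le_trans (empnormD _ _ _) _.
  by rewrite empnormZ normrN normr1 mul1r.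
have tn2 : forall j, empnorm X (diff j) <= empnorm X (ghat j) + empnorm X (gstar j).
  move=> j.
  have -> : diff j = (fun x => ghat j x + (-1) * gstar j x).
    by apply: funext => x; rewrite /diff; ring.
  apply: le_trans (empnormD _ _ _) _.
  by rewrite empnormZ normrN normr1 mul1r.
have tf : forall j, nF j (diff j) <= nF j (ghat j) + nF j (gstar j).
  move=> j; have [_ _ hZ _ [_ hFZ hFT]] := hstr j.
  have -> : diff j = (fun x => ghat j x + (-1) * gstar j x).
    by apply: funext => x; rewrite /diff; ring.
  apply: le_trans (hFT _ _ (hGg j) (hZ (-1) _ (hGs j))) _.
  by rewrite hFZ ?hGs // normrN normr1 mul1r.
have hobj := hmin gstar hGs.
have ee : emploss X Y (gsum ghat) = emploss X Y (gsum gstar) + empnorm X (gsum diff) ^+ 2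
    - 2 * empinner X (fun i => eps i om) (gsum diff)
  := @emploss_expand _ _ _ _ X gstar ghat (fun i => eps i om).
have hinner : empinner X (fun i => eps i om) (gsum diff)
    <= \sum_(j < p) lam * (empnorm X (diff j) + w * nF j (diff j)).
  rewrite empinner_gsum; apply: ler_sum => j _.
  exact: le_trans (ler_norm _) (hnoise j _ (Gd j)).
have hbasic0 : empnorm X (gsum diff) ^+ 2 / 2
    + A0 * \sum_(j < p) (lam * w * nF j (ghat j) + lam * empnorm X (ghat j))
  <= \sum_(j < p) lam * (empnorm X (diff j) + w * nF j (diff j))
    + A0 * \sum_(j < p) (lam * w * nF j (gstar j) + lam * empnorm X (gstar j)).
  move: hobj; rewrite /objective ee.
  change (Rpen X nF (fun=> lam) (fun=> lam * w) ghat) with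
    (\sum_(j < p) (lam * w * nF j (ghat j) + lam * empnorm X (ghat j))).
  change (Rpen X nF (fun=> lam) (fun=> lam * w) gstar) with
    (\sum_(j < p) (lam * w * nF j (gstar j) + lam * empnorm X (gstar j))).
  move: hinner; lra.
have A00 : 0 <= A0 by lra.
have hdet := @det_sum R p S lam w A0 _ _ _ _ _ _ _ (ltW lam0) (ltW w0) A00 tn1 tn2 tf hbasic0.
have hD : 0 <= empnorm X (gsum diff) ^+ 2 by exact: sqr_ge0.
have hcore := cases_core _ _ _ _ _ _ _ _ x1 hA k0 hD _ _ _ _ hdet (hcomp diff Gd).
have nF0 : forall j f, G j f -> 0 <= nF j f by move=> j f Gf; have [_ _ _ _ [h _ _]] := hstr j; exact: h.
have ha : 0 <= \sum_(j < p | j \in S) lam * empnorm X (diff j).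
  by apply: sumr_ge0 => j _; apply: mulr_ge0; [exact: ltW|exact: empnorm_ge0].
have hb : 0 <= \sum_(j < p) lam * w * nF j (diff j) + \sum_(j < p | j \notin S) lam * empnorm X (diff j).
  apply: addr_ge0; apply: sumr_ge0 => j _.
    by apply: mulr_ge0; [apply: mulr_ge0; exact: ltW|exact: nF0].
  by apply: mulr_ge0; [exact: ltW|exact: empnorm_ge0].
have hs : 0 <= \sum_(j < p | j \in S) lam ^+ 2 by apply: sumr_ge0 => j _; exact: sqr_ge0.
have he : 0 <= \sum_(j < p) lam * w * nF j (gstar j) + \sum_(j < p | j \notin S) lam * empnorm X (gstar j).
  apply: addr_ge0; apply: sumr_ge0 => j _.
    by apply: mulr_ge0; [apply: mulr_ge0; exact: ltW|exact: nF0].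
  by apply: mulr_ge0; [exact: ltW|exact: empnorm_ge0].
have hc := hcore ha hb hs he.
have eR : Rpen X nF (fun=> lam) (fun=> lam * w) diff =
    \sum_(j < p | j \in S) lam * empnorm X (diff j) +
    (\sum_(j < p) lam * w * nF j (diff j) + \sum_(j < p | j \notin S) lam * empnorm X (diff j)).
  change (Rpen X nF (fun=> lam) (fun=> lam * w) diff) with
    (\sum_(j < p) (lam * w * nF j (diff j) + lam * empnorm X (diff j))).
  rewrite big_split /= [\sum_(j < p) lam * empnorm X (diff j)](bigID (fun j => j \in S)) /=.
  ring.
rewrite eR; apply: le_trans hc _.
set M := C1 ^+ 2 * L `^ (2 - q).
have C1q0 : 0 < C1 `^ q by apply: powR_gt0.
have C0q0 : 0 < C0 `^ q by apply: powR_gt0.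
have Lq : L * L `^ (1 - q) = L `^ (2 - q).
  by rewrite -{1}(powRr1 (ltW L0)) -powRD_pos //; congr powR; ring.
have lam1q : lam * lam `^ (1 - q) = lam `^ (2 - q).
  by rewrite -{1}(powRr1 (ltW lam0)) -powRD_pos //; congr powR; ring.
have lamq : lam `^ (2 - q) = C1 `^ (2 - q) * L `^ (2 - q) by rewrite lamE powRM // ltW.
have C1q : C1 `^ (2 - q) * C1 `^ q = C1 ^+ 2.
  by rewrite -powRD_pos // subrK -(powR_mulrn 2 (ltW C10)).
have lam2 : lam ^+ 2 = lam `^ (2 - q) * lam `^ q.
  by rewrite -powRD_pos // subrK -(powR_mulrn 2 (ltW lam0)).
have C0lq : (C0 * lam) `^ q = C0 `^ q * lam `^ q by rewrite powRM // ltW.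
have C0N : C0 `^ (- q) = (C0 `^ q)^-1 by rewrite powRN.
have C0l1q : (C0 * lam) `^ (1 - q) = C0 `^ (1 - q) * lam `^ (1 - q) by rewrite powRM // ltW.
have M0 : 0 <= M by apply: mulr_ge0; [exact: sqr_ge0|exact: powR_ge0].
have qq : 0 <= q <= 1 by rewrite q0 q1.
have C0lam0 : 0 < C0 * lam by apply: mulr_gt0.
have sumq : forall (Q : pred 'I_p), \sum_(j < p | Q j) qpow (empnorm X (gstar j)) q <= C1 `^ q * Mq.
  move=> Q; apply: le_trans hMq; rewrite [X in _ <= X](bigID Q) /= lerDl.
  by apply: sumr_ge0 => j _; exact: qpow_ge0.
have hs_bd : \sum_(j < p | j \in S) lam ^+ 2 <= C0 `^ (- q) * M * Mq.
  have eqs1 : lam ^+ 2 = C0 `^ (- q) * M / C1 `^ q * (C0 * lam) `^ q.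
    rewrite lam2 lamq C0lq C0N /M -C1q; field.
    by rewrite !gt_eqF.
  have h1 : forall j, j \in S -> lam ^+ 2 <= C0 `^ (- q) * M / C1 `^ q * qpow (empnorm X (gstar j)) q.
    move=> j; rewrite inE => hj; rewrite eqs1; apply: ler_wpM2l.
      by apply: divr_ge0; [apply: mulr_ge0|exact: ltW]; [exact: powR_ge0|].
    exact: qpow_ge.
  apply: le_trans; first exact: (ler_sum (index_enum _) h1).
  rewrite -mulr_sumr.
  have := sumq (fun j => j \in S) => hq.
  have -> : C0 `^ (- q) * M * Mq = C0 `^ (- q) * M / C1 `^ q * (C1 `^ q * Mq).
    by field; rewrite gt_eqF.
  apply: ler_wpM2l => //.
  by apply: divr_ge0; [apply: mulr_ge0|exact: ltW]; [exact: powR_ge0|].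
have he_bd1 : \sum_(j < p) lam * w * nF j (gstar j) <= M * MF.
  rewrite -mulr_sumr.
  have hlw : lam * w * C1 <= M.
    rewrite /M lamE -Lq.
    have : w <= L `^ (1 - q).
      by rewrite wE; apply: ge0_ler_powR; rewrite ?subr_ge0 ?nnegrE // ltW.
    move=> hw; have hC : 0 <= C1 * C1 * L by apply: mulr_ge0; [apply: mulr_ge0|]; exact: ltW.
    have := ler_wpM2l hC hw.
    have -> : C1 * L * w * C1 = C1 * C1 * L * w by ring.
    by have -> : C1 ^+ 2 * (L * L `^ (1 - q)) = C1 * C1 * L * L `^ (1 - q) by ring.
  apply: le_trans (ler_wpM2l _ hMF) _; first by apply: mulr_ge0; exact: ltW.
  by rewrite mulrA; apply: ler_wpM2r; [exact: ltW|].
have he_bd2 : \sum_(j < p | j \notin S) lam * empnorm X (gstar j) <= C0 `^ (1 - q) * M * Mq.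
  have eqs2 : lam * (C0 * lam) `^ (1 - q) = C0 `^ (1 - q) * M / C1 `^ q.
    rewrite C0l1q mulrCA lam1q lamq /M -C1q; field.
    by rewrite gt_eqF.
  have h1 : forall j, j \notin S -> lam * empnorm X (gstar j)
       <= C0 `^ (1 - q) * M / C1 `^ q * qpow (empnorm X (gstar j)) q.
    move=> j; rewrite inE -leNgt => hj; rewrite -eqs2 -mulrA; apply: ler_wpM2l; first exact: ltW.
    apply: qpow_le => //; rewrite hj empnorm_ge0 //.
  apply: le_trans; first exact: (ler_sum (index_enum _) h1).
  rewrite -mulr_sumr.
  have := sumq (fun j => j \notin S) => hq.
  have -> : C0 `^ (1 - q) * M * Mq = C0 `^ (1 - q) * M / C1 `^ q * (C1 `^ q * Mq).
    by field; rewrite gt_eqF.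
  apply: ler_wpM2l => //.
  by apply: divr_ge0; [apply: mulr_ge0|exact: ltW]; [exact: powR_ge0|].
have K10 := @K1_ge0 R A0 kappa0.
have K20 := K2_ge0 _ _ x1 hA.
have c0q := powR_ge0 C0 (- q); have c01 := powR_ge0 C0 (1 - q).
have -> : (K1 A0 kappa0 * C0 `^ (- q) + K2 A0 xi0 * (1 + C0 `^ (1 - q))) * C1 ^+ 2 * (MF + Mq) * L `^ (2 - q)
   = K1 A0 kappa0 * (C0 `^ (- q) * M * (MF + Mq)) + K2 A0 xi0 * ((1 + C0 `^ (1 - q)) * M * (MF + Mq)).
  by rewrite /M; ring.
apply: lerD.
  apply: ler_wpM2l => //; apply: le_trans hs_bd _.
  apply: ler_wpM2l; [exact: mulr_ge0|lra].
apply: ler_wpM2l => //.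
have t1 : 0 <= M * Mq by apply: mulr_ge0 => //; exact: ltW.
have t2 : 0 <= C0 `^ (1 - q) * M * MF by apply: mulr_ge0; [exact: mulr_ge0|exact: ltW].
have -> : (1 + C0 `^ (1 - q)) * M * (MF + Mq) = M * MF + C0 `^ (1 - q) * M * Mq + (M * Mq + C0 `^ (1 - q) * M * MF) by ring.
have := lerD he_bd1 he_bd2; lra.
Qed.
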